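(* Let $Q$ be a quantity space over a field $K$. Then $Q/{\sim}$, with multiplication $[x][y]=[xy]$, is a free abelian group of finite rank.
   Context: A scalable monoid over a (unital, associative) ring $R$ is a monoid $X$ (identity $1_X$, product written $xy$) together with a map $R\times X\to X$, $(\alpha,x)\mapsto\alpha\cdot x$, such that $1\cdot x=x$, $\alpha\cdot(\beta\cdot x)=\alpha\beta\cdot x$ and $\alpha\cdot(xy)=(\alpha\cdot x)y=x(\alpha\cdot y)$ for all $\alpha,\beta\in R$, $x,y\in X$. A quantity space over a field $K$ is a commutative scalable monoid $Q$ over $K$ for which there exists a finite set $\{e_1,\ldots,e_n\}$ of invertible elements of $Q$ (a basis) such that every $x\in Q$ has a unique expansion $x=\mu\cdot\prod_{i=1}^n e_i^{k_i}$ with $\mu\in K$ and $k_1,\ldots,k_n\in\mathbb{Z}$. On $Q$, $x\sim y$ means $\alpha\cdot x=\beta\cdot y$ for some $\alpha,\beta\in K$; this is an equivalence relation compatible with multiplication, $[x]$ denotes the class of $x$ (a dimension), and $Q/{\sim}$ is the set of classes with $[x][y]=[xy]$ and identity $[1_Q]$. *)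

(* Defs.v *)
From HB Require Import structures.
From mathcomp Require Import all_boot all_order all_algebra.
Set Implicit Arguments. Unset Strict Implicit. Unset Printing Implicit Defensive.
Import Order.TTheory GRing.Theory Num.Theory.
Local Open Scope ring_scope.

Definition scalable_monoid (R : ringType) (X : Type) (mul : X -> X -> X)
    (one : X) (scale : R -> X -> X) : Prop :=
  [/\ (forall x y z, mul x (mul y z) = mul (mul x y) z),
      (forall x, mul one x = x /\ mul x one = x),
      (forall x, scale 1 x = x),
      (forall a b x, scale a (scale b x) = scale (a * b) x)
    & (forall a x y, scale a (mul x y) = mul (scale a x) y /\
                     scale a (mul x y) = mul x (scale a y))].

Definition zpow (X : Type) (mul : X -> X -> X) (one : X) (e einv : X)
    (k : int) : X :=
  match k with
  | Posz n => iter n (mul e) one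
  | Negz n => iter n.+1 (mul einv) one
  end.

(* prod_{i < n} e_i ^ k_i  (order irrelevant in a commutative monoid). *)
Definition basis_monomial (X : Type) (mul : X -> X -> X) (one : X) (n : nat)
    (e einv : 'I_n -> X) (k : 'I_n -> int) : X :=
  foldr (fun i acc => mul (zpow mul one (e i) (einv i) (k i)) acc) one
    (enum 'I_n).

Definition quantity_space (K : fieldType) (X : Type) (mul : X -> X -> X)
    (one : X) (scale : K -> X -> X) : Prop :=
  [/\ scalable_monoid mul one scale,
      (forall x y, mul x y = mul y x)
    & exists (n : nat) (e einv : 'I_n -> X),
        [/\ (forall i, mul (e i) (einv i) = one /\ mul (einv i) (e i) = one),
            (forall x, exists (mu : K) (k : 'I_n -> int),
                 x = scale mu (basis_monomial mul one e einv k))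
          & (forall (mu mu' : K) (k k' : 'I_n -> int),
                 scale mu (basis_monomial mul one e einv k) =
                 scale mu' (basis_monomial mul one e einv k') ->
                 mu = mu' /\ (forall i, k i = k' i))]].

Definition qsim (K : fieldType) (X : Type) (scale : K -> X -> X) (x y : X) :
    Prop := exists a b : K, scale a x = scale b y.

(* Main.v *)
Require Import Defs.
From HB Require Import structures.
From mathcomp Require Import all_boot all_order all_algebra.
From Stdlib Require Import ClassicalEpsilon.
From mathcomp Require Import zify.
Import Order.TTheory GRing.Theory Num.Theory.
Local Open Scope ring_scope.

Section CM.
Variables (X : Type) (mul : X -> X -> X) (one : X).
Hypothesis mA : forall x y z, mul x (mul y z) = mul (mul x y) z.
Hypothesis m1 : forall x, mul one x = x /\ mul x one = x.
Hypothesis mC : forall x y, mul x y = mul y x.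

Lemma mul1x x : mul one x = x. Proof. by case: (m1 x). Qed.
Lemma mulx1 x : mul x one = x. Proof. by case: (m1 x). Qed.

Lemma mACA a b c d : mul (mul a b) (mul c d) = mul (mul a c) (mul b d).
Proof.
by rewrite -!mA; congr (mul a); rewrite !mA (mC b c).
Qed.

Definition pw x n := iter n (mul x) one.

Lemma pwD x a b : pw x (a + b)%N = mul (pw x a) (pw x b).
Proof.
elim: a => [|a IH] /=; first by rewrite add0n mul1x.
by rewrite /pw ?addSn /= -/(pw x (a + b)%N) -/(pw x a) IH mA.
Qed.

Variables (e einv : X).
Hypothesis eV : mul e einv = one.

Lemma pwV n : mul (pw e n) (pw einv n) = one.
Proof.
elim: n => [|n IH] /=; first by rewrite mul1x.
by rewrite /pw /= -/(pw e n) -/(pw einv n) mACA eV IH mul1x.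
Qed.

Lemma pwL p q r : mul (pw e p) (pw einv q) = mul (pw e (p + r)%N) (pw einv (q + r)%N).
Proof. by rewrite !pwD mACA pwV mulx1. Qed.

Lemma indep p q p' q' : (p + q' = p' + q)%N ->
  mul (pw e p) (pw einv q) = mul (pw e p') (pw einv q').
Proof.
move=> H; rewrite (pwL p q q') (pwL p' q' q) H; congr (mul _ (pw _ _)).
by rewrite addnC.
Qed.

Lemma zpowE (k : int) (p q : nat) : k = p%:Z - q%:Z ->
  zpow mul one e einv k = mul (pw e p) (pw einv q).
Proof.
case: k => n /= H.
  rewrite -/(pw e n) -(mulx1 (pw e n)).
  apply: (@indep n 0 p q); lia.
transitivity (mul (pw e 0) (pw einv n.+1)); first by rewrite /= mul1x.
apply: (@indep 0 n.+1 p q); lia.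
Qed.

Lemma zpowD (a b : int) : zpow mul one e einv (a + b) =
  mul (zpow mul one e einv a) (zpow mul one e einv b).
Proof.
have [p [q Hpq]] : exists p q : nat, a = p%:Z - q%:Z.
  case: a => n; [exists n, 0%N | exists 0%N, n.+1]; lia.
have [p' [q' Hpq']] : exists p q : nat, b = p%:Z - q%:Z.
  case: b => n; [exists n, 0%N | exists 0%N, n.+1]; lia.
rewrite (zpowE _ _ _ Hpq) (zpowE _ _ _ Hpq') (@zpowE _ (p + p')%N (q + q')%N); last lia.
by rewrite !pwD mACA.
Qed.

End CM.

Theorem proposition3p20 (K : fieldType) (Q : Type) (mul : Q -> Q -> Q)
    (one : Q) (scale : K -> Q -> Q) :
  quantity_space mul one scale ->
  exists (m : nat) (phi : Q -> 'rV[int]_m),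
    [/\ phi one = 0,
        (forall x y, phi (mul x y) = phi x + phi y),
        (forall v : 'rV[int]_m, exists x, phi x = v)
      & (forall x y, phi x = phi y <-> qsim scale x y)].
Proof.
case=> [[mA m1 s1 sM sML] mC [n [e [einv [eV Ex Un]]]]].
pose M := basis_monomial mul one e einv.
have Ex' : forall x, exists k, exists mu, x = scale mu (M k).
  by move=> x; have [mu [k H]] := Ex x; exists k, mu.
pose kk x := proj1_sig (constructive_indefinite_description _ (Ex' x)).
have kkP : forall x, exists mu, x = scale mu (M (kk x)).
  by move=> x; rewrite /kk; case: constructive_indefinite_description.
have kkU : forall x mu k, x = scale mu (M k) -> forall i, kk x i = k i.
  move=> x mu k Hx i; have [mu' Hx'] := kkP x.
  have H : scale mu' (M (kk x)) = scale mu (M k) by rewrite -Hx' -Hx.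
  by have [_ ->] := Un _ _ _ _ H.
have Mext : forall k k', (forall i, k i = k' i) -> M k = M k'.
  move=> k k' Hk; rewrite /M /basis_monomial.
  by elim: (enum 'I_n) => [|i s IH] //=; rewrite IH Hk.
have MD : forall k k', M (fun i => k i + k' i) = mul (M k) (M k').
  move=> k k'; rewrite /M /basis_monomial.
  elim: (enum 'I_n) => [|i s IH] /=; first by rewrite (@mul1x _ _ _ m1).
  rewrite IH (@zpowD _ _ _ mA m1 mC (e i) (einv i)); last by case: (eV i).
  by rewrite (@mACA _ _ mA mC).
have M0 : M (fun _ => 0) = one.
  rewrite /M /basis_monomial.
  by elim: (enum 'I_n) => [|i s IH] //=; rewrite IH (@mul1x _ _ _ m1).
have sMM : forall a b u v, mul (scale a u) (scale b v) = scale (a * b) (mul u v).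
  move=> a b u v; rewrite -sM; have [_ ->] := sML b u v.
  by have [-> _] := sML a u (scale b v).
exists n, (fun x => \row_i kk x i); split.
- apply/rowP => i; rewrite !mxE.
  by apply: (kkU one 1 (fun _ => 0)); rewrite M0 s1.
- move=> x y; apply/rowP => i; rewrite !mxE.
  have [mu Hx] := kkP x; have [mu' Hy] := kkP y.
  apply: (kkU _ (mu * mu') (fun i => kk x i + kk y i)).
  by rewrite MD -sMM -Hx -Hy.
- move=> v; exists (M (fun i => v ord0 i)); apply/rowP => i; rewrite !mxE.
  by apply: (kkU _ 1 (fun i => v ord0 i)); rewrite s1.
- move=> x y; have [mu Hx] := kkP x; have [mu' Hy] := kkP y; split.
  + move=> /rowP H; exists mu', mu.
    rewrite {1}Hx Hy !sM mulrC; congr scale; apply: Mext => i.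
    by have := H i; rewrite !mxE.
  + case=> a [b] H; apply/rowP => i; rewrite !mxE.
    have H' : scale (a * mu) (M (kk x)) = scale (b * mu') (M (kk y)).
      by rewrite -!sM -Hx -Hy.
    by have [_ ->] := Un _ _ _ _ H'.
Qed.
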